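(* If $d_{GH}\bigl(\mathcal{H}(X),\mathcal{H}(Y)\bigr) = d_{GH}(X,Y)$ for all finite metric spaces $X,Y$, then $d_{GH}\bigl(\mathcal{H}(X),\mathcal{H}(Y)\bigr) = d_{GH}(X,Y)$ for all compact metric spaces $X,Y$.
   Context: $d_{GH}$ is the Gromov–Hausdorff distance (the infimum of $r$ such that there is a metric space $Z$ containing isometric copies $X',Y'$ of $X,Y$ with Hausdorff distance $|X'Y'|_Z\le r$). For a compact metric space $X$, $\mathcal{H}(X)$ is the set of all nonempty closed subsets of $X$ with the Hausdorff distance $|AB| = \max\{\sup_{a\in A}\inf_{b\in B}|ab|, \sup_{b\in B}\inf_{a\in A}|ab|\}$. *)

(* Defs.v *)
From Stdlib Require Import Reals List ClassicalEpsilon.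
Open Scope R_scope.

Record MSpace := { carrier :> Type; dist : carrier -> carrier -> R }.
Arguments dist {m} _ _.

Definition is_metric (X : MSpace) : Prop :=
  (forall x y : X, 0 <= dist x y) /\
  (forall x y : X, dist x y = 0 <-> x = y) /\
  (forall x y : X, dist x y = dist y x) /\
  (forall x y z : X, dist x z <= dist x y + dist y z).

(* supremum / infimum of a set of reals (meaningful when it exists) *)
Definition Rsup (P : R -> Prop) : R := @epsilon R (inhabits 0) (fun m => is_lub P m).
Definition Rinf (P : R -> Prop) : R := - Rsup (fun x => P (- x)).

Definition dist_pt_set {X : MSpace} (a : X) (B : X -> Prop) : R :=
  Rinf (fun r => exists b, B b /\ r = dist a b).

Definition hexcess {X : MSpace} (A B : X -> Prop) : R :=
  Rsup (fun r => exists a, A a /\ r = dist_pt_set a B).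

Definition hausdorff {X : MSpace} (A B : X -> Prop) : R :=
  Rmax (hexcess A B) (hexcess B A).

Definition is_closed {X : MSpace} (A : X -> Prop) : Prop :=
  forall x : X, (forall eps, 0 < eps -> exists a, A a /\ dist x a < eps) -> A x.

Definition nonempty_set {X : MSpace} (A : X -> Prop) : Prop := exists x, A x.

Definition Hcarrier (X : MSpace) : Type :=
  { A : X -> Prop | nonempty_set A /\ is_closed A }.

Definition Hyper (X : MSpace) : MSpace :=
  {| carrier := Hcarrier X;
     dist := fun A B => hausdorff (proj1_sig A) (proj1_sig B) |}.

Definition isometric_embedding {X Z : MSpace} (f : X -> Z) : Prop :=
  forall x x' : X, dist (f x) (f x') = dist x x'.

Definition image {X Z : MSpace} (f : X -> Z) : Z -> Prop :=
  fun z => exists x, f x = z.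

Definition dGH (X Y : MSpace) : R :=
  Rinf (fun r => exists (Z : MSpace) (f : X -> Z) (g : Y -> Z),
          is_metric Z /\ isometric_embedding f /\ isometric_embedding g /\
          hausdorff (image f) (image g) <= r).

Definition finite_space (X : MSpace) : Prop := exists l : list X, forall x, In x l.

Definition compact_space (X : MSpace) : Prop :=
  forall u : nat -> X, exists (phi : nat -> nat) (l : X),
    (forall n, (phi n < phi (S n))%nat) /\
    (forall eps, 0 < eps -> exists N, forall n, (N <= n)%nat -> dist (u (phi n)) l < eps).

(* Main.v *)
Require Import Defs.
From Stdlib Require Import Reals Lra Lia List Classical ClassicalEpsilon FunctionalExtensionality PropExtensionality ProofIrrelevance.
Open Scope R_scope.
Local Notation dist := Defs.dist.

Lemma Rsup_lub (P : R -> Prop) : (exists x, P x) -> (exists M, forall x, P x -> x <= M) -> is_lub P (Rsup P).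
Proof.
  intros [x Hx] [M HM]. unfold Rsup. apply epsilon_spec.
  destruct (completeness P) as [m Hm].
  - exists M. intros y Hy. apply HM; exact Hy.
  - exists x; exact Hx.
  - exists m; exact Hm.
Qed.

Lemma Rsup_le P r : (exists x, P x) -> (forall x, P x -> x <= r) -> Rsup P <= r.
Proof. intros Hne Hb. destruct (Rsup_lub P Hne (ex_intro _ r Hb)) as [_ H]. apply H. intros y Hy; apply Hb; auto. Qed.

Lemma le_Rsup P M x : (forall y, P y -> y <= M) -> P x -> x <= Rsup P.
Proof. intros Hb Hx. destruct (Rsup_lub P (ex_intro _ x Hx) (ex_intro _ M Hb)) as [H _]. apply H; auto. Qed.

Lemma Rinf_le P m x : (forall y, P y -> m <= y) -> P x -> Rinf P <= x.
Proof. intros Hb Hx. unfold Rinf.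
  enough (-x <= Rsup (fun y => P (-y))) by lra.
  apply le_Rsup with (M := -m). intros y Hy. specialize (Hb _ Hy). lra. rewrite Ropp_involutive. exact Hx. Qed.

Lemma Rinf_ge P r : (exists x, P x) -> (forall y, P y -> r <= y) -> r <= Rinf P.
Proof. intros [x Hx] Hb. unfold Rinf.
  enough (Rsup (fun y => P (-y)) <= -r) by lra.
  apply Rsup_le. exists (-x). rewrite Ropp_involutive; auto.
  intros y Hy. specialize (Hb _ Hy). lra. Qed.

Lemma Rinf_approx P m e : (exists x, P x) -> (forall y, P y -> m <= y) -> 0 < e -> exists x, P x /\ x < Rinf P + e.
Proof. intros Hne Hb He. apply NNPP. intro Hn.
  assert (Rinf P + e <= Rinf P). { apply Rinf_ge; auto. intros y Hy. apply Rnot_lt_le. intro Hlt. apply Hn. exists y; auto. }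
  lra. Qed.

Definition Hle {Z : MSpace} (A B : Z -> Prop) (r : R) : Prop :=
  (forall a, A a -> forall e, 0 < e -> exists b, B b /\ dist a b < r + e) /\
  (forall b, B b -> forall e, 0 < e -> exists a, A a /\ dist b a < r + e).
Definition bnd {Z : MSpace} (A B : Z -> Prop) M := forall a b, A a -> B b -> dist a b <= M.

Lemma Hle_sym {Z : MSpace} (A B : Z -> Prop) r : Hle A B r -> Hle B A r.
Proof. intros [H1 H2]; split; auto. Qed.

Lemma Hle_mono {Z : MSpace} (A B : Z -> Prop) r s : Hle A B r -> r <= s -> Hle A B s.
Proof. intros [H1 H2] Hrs; split.
  - intros a Ha e He. destruct (H1 a Ha e He) as [b [Hb Hd]]. exists b; split; auto; lra.
  - intros a Ha e He. destruct (H2 a Ha e He) as [b [Hb Hd]]. exists b; split; auto; lra.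
Qed.

Section Met.
Variable Z : MSpace.
Hypothesis HZ : is_metric Z.

Lemma d_nonneg (x y : Z) : 0 <= dist x y. Proof. apply (proj1 HZ). Qed.
Lemma d_refl (x : Z) : dist x x = 0. Proof. destruct HZ as [_ [H _]]. apply H. reflexivity. Qed.
Lemma d_eq0 (x y : Z) : dist x y = 0 -> x = y. Proof. destruct HZ as [_ [H _]]. apply H. Qed.
Lemma d_sym (x y : Z) : dist x y = dist y x. Proof. apply (proj1 (proj2 (proj2 HZ))). Qed.
Lemma d_tri (x y z : Z) : dist x z <= dist x y + dist y z. Proof. apply (proj2 (proj2 (proj2 HZ))). Qed.

Lemma dps_le (a : Z) (B : Z -> Prop) b : B b -> dist_pt_set a B <= dist a b.
Proof. intros Hb. unfold dist_pt_set. apply Rinf_le with 0.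
  intros y [b' [_ ->]]. apply d_nonneg. exists b; split; auto. Qed.

Lemma dps_nonneg (a : Z) B : nonempty_set B -> 0 <= dist_pt_set a B.
Proof. intros [b Hb]. apply Rinf_ge. exists (dist a b); exists b; split; auto.
  intros y [b' [_ ->]]; apply d_nonneg. Qed.

Lemma dps_approx (a : Z) B e : nonempty_set B -> 0 < e -> exists b, B b /\ dist a b < dist_pt_set a B + e.
Proof. intros [b Hb] He.
  destruct (Rinf_approx (fun r => exists b, B b /\ r = dist a b) 0 e) as [x [[b' [Hb' ->]] Hx]]; auto.
  - exists (dist a b), b; split; auto.
  - intros y [b'' [_ ->]]; apply d_nonneg.
  - exists b'; split; auto. Qed.

Lemma hexcess_le (A B : Z -> Prop) r : nonempty_set A ->
  (forall a, A a -> forall e, 0 < e -> exists b, B b /\ dist a b < r + e) -> hexcess A B <= r.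
Proof. intros [a0 Ha0] H. unfold hexcess. apply Rsup_le.
  - exists (dist_pt_set a0 B). exists a0; auto.
  - intros y [a [Ha ->]]. apply Rle_plus_epsilon. intros e He.
    destruct (H a Ha e He) as [b [Hb Hd]]. pose proof (dps_le a B b Hb). lra.
Qed.

Lemma hausdorff_le (A B : Z -> Prop) r : nonempty_set A -> nonempty_set B -> Hle A B r -> hausdorff A B <= r.
Proof. intros HA HB [H1 H2]. unfold hausdorff. apply Rmax_lub; apply hexcess_le; auto. Qed.

Lemma hexcess_ge (A B : Z -> Prop) M a : bnd A B M -> A a -> nonempty_set B -> dist_pt_set a B <= hexcess A B.
Proof. intros Hb Ha [b0 Hb0]. unfold hexcess. apply le_Rsup with M.
  - intros y [a' [Ha' ->]]. eapply Rle_trans. apply (dps_le a' B b0 Hb0). apply Hb; auto.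
  - exists a; auto. Qed.

Lemma bnd_sym (A B : Z -> Prop) M : bnd A B M -> bnd B A M.
Proof. intros H b a Hb Ha; rewrite d_sym; auto. Qed.

Lemma hausdorff_Hle (A B : Z -> Prop) M : nonempty_set A -> nonempty_set B -> bnd A B M -> Hle A B (hausdorff A B).
Proof. intros HA HB Hb. split.
  - intros a Ha e He. destruct (dps_approx a B e HB He) as [b [Hb' Hd]]. exists b; split; auto.
    pose proof (hexcess_ge A B M a Hb Ha HB). pose proof (Rmax_l (hexcess A B) (hexcess B A)). unfold hausdorff. lra.
  - intros a Ha e He. destruct (dps_approx a A e HA He) as [b [Hb' Hd]]. exists b; split; auto.
    pose proof (hexcess_ge B A M a (bnd_sym _ _ _ Hb) Ha HA). pose proof (Rmax_r (hexcess A B) (hexcess B A)). unfold hausdorff. lra.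
Qed.

Lemma hausdorff_nonneg (A B : Z -> Prop) M : nonempty_set A -> nonempty_set B -> bnd A B M -> 0 <= hausdorff A B.
Proof. intros [a Ha] HB Hb. pose proof (hexcess_ge A B M a Hb Ha HB). pose proof (dps_nonneg a B HB).
  pose proof (Rmax_l (hexcess A B) (hexcess B A)). unfold hausdorff; lra. Qed.

Lemma Hle_trans (A B C : Z -> Prop) r s : Hle A B r -> Hle B C s -> Hle A C (r+s).
Proof. intros [H1 H2] [H3 H4]. split.
  - intros a Ha e He. destruct (H1 a Ha (e/2)) as [b [Hb Hab]]; [lra|]. destruct (H3 b Hb (e/2)) as [c [Hc Hbc]]; [lra|].
    exists c; split; auto. pose proof (d_tri a b c). lra.
  - intros c Hc e He. destruct (H4 c Hc (e/2)) as [b [Hb Hcb]]; [lra|]. destruct (H2 b Hb (e/2)) as [a [Ha Hba]]; [lra|].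
    exists a; split; auto. pose proof (d_tri c b a). lra.
Qed.

Lemma Hle_refl (A : Z -> Prop) : Hle A A 0.
Proof. split; intros a Ha e He; exists a; split; auto; rewrite d_refl; lra. Qed.

Lemma sep_list (x : Z) (l : list Z) : exists eps, 0 < eps /\ forall a, In a l -> a <> x -> eps <= dist x a.
Proof. induction l as [|a l [eps [Heps IH]]].
  - exists 1; split; [lra| intros a []].
  - destruct (classic (a = x)) as [->|Hax].
    + exists eps; split; auto. intros b [<-|Hb] Hbx; [congruence| auto].
    + assert (0 < dist x a). { pose proof (d_nonneg x a). destruct H; auto. exfalso; apply Hax; symmetry; apply d_eq0; auto. }
      exists (Rmin eps (dist x a)); split. apply Rmin_glb_lt; auto.
      intros b [<-|Hb] Hbx. apply Rmin_r. eapply Rle_trans. apply Rmin_l. auto.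
Qed.

Lemma finite_closed (A : Z -> Prop) (l : list Z) : (forall z, A z -> In z l) -> is_closed A.
Proof. intros Hl x Hx. destruct (sep_list x l) as [eps [He H]].
  destruct (Hx eps He) as [a [Ha Hd]]. destruct (classic (a = x)) as [<-|Hax]; auto.
  specialize (H a (Hl a Ha) Hax). lra. Qed.

End Met.
Definition bounded (X : MSpace) := exists M, forall x y : X, dist x y <= M.

Lemma Hyper_dist X (A B : Hyper X) : dist A B = hausdorff (proj1_sig A) (proj1_sig B).
Proof. reflexivity. Qed.

Lemma Hyper_metric X : is_metric X -> bounded X -> is_metric (Hyper X).
Proof.
  intros HX [M HM].
  assert (Hb : forall A B : X -> Prop, bnd A B M) by (intros A B a b _ _; apply HM).
  split; [|split; [|split]].
  - intros [A [HA HA2]] [B [HB HB2]]. rewrite Hyper_dist. simpl. eapply hausdorff_nonneg; eauto.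
  - intros [A [HA HcA]] [B [HB HcB]]. rewrite Hyper_dist. simpl. split.
    + intro H0. destruct (hausdorff_Hle X HX A B M HA HB (Hb _ _)) as [H1 H2]. rewrite H0 in H1, H2.
      assert (A = B).
      { extensionality x. apply propositional_extensionality. split; intro Hx.
        - apply HcB. intros eps He. destruct (H1 x Hx eps He) as [b [Hb' Hd]]. exists b; split; auto; lra.
        - apply HcA. intros eps He. destruct (H2 x Hx eps He) as [b [Hb' Hd]]. exists b; split; auto; lra. }
      subst B. f_equal. apply proof_irrelevance.
    + intro H. injection H as ->. apply Rle_antisym.
      * apply hausdorff_le; auto. apply Hle_refl; auto.
      * eapply hausdorff_nonneg; eauto.
  - intros A B. rewrite !Hyper_dist. unfold hausdorff. apply Rmax_comm.
  - intros [A [HA HA2]] [B [HB HB2]] [C [HC HC2]]. rewrite !Hyper_dist. simpl.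
    apply hausdorff_le; auto. eapply Hle_trans; auto; eapply hausdorff_Hle; eauto.
Qed.

Lemma Hyper_bounded X : is_metric X -> bounded X -> bounded (Hyper X).
Proof. intros HX [M HM]. exists M. intros [A [HA HA2]] [B [HB HB2]]. rewrite Hyper_dist; simpl.
  apply hausdorff_le; auto. split.
  - intros a _ e He. destruct HB as [b Hb]. exists b; split; auto. specialize (HM a b); lra.
  - intros a _ e He. destruct HA as [b Hb]. exists b; split; auto. specialize (HM a b); lra.
Qed.

Lemma Hyper_inhabited X : is_metric X -> inhabited X -> inhabited (Hyper X).
Proof. intros HX [x0]. constructor. exists (fun x => x = x0). split.
  - exists x0; reflexivity.
  - apply (finite_closed X HX _ (x0 :: nil)). intros z ->; left; reflexivity.
Qed.

Definition good (X : MSpace) := is_metric X /\ inhabited X /\ bounded X.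

Lemma Hyper_good X : good X -> good (Hyper X).
Proof. intros [HX [Hi Hb]]. split; [|split]. apply Hyper_metric; auto. apply Hyper_inhabited; auto. apply Hyper_bounded; auto. Qed.

Definition dunion (A B : MSpace) (D : R) : MSpace :=
  {| carrier := (A + B)%type;
     dist := fun u v => match u, v with
       | inl a, inl a' => dist a a' | inr b, inr b' => dist b b'
       | _, _ => D end |}.

Lemma dunion_metric A B MA MB : is_metric A -> is_metric B -> (forall x y : A, dist x y <= MA) -> (forall x y : B, dist x y <= MB) ->
  is_metric (dunion A B (Rabs MA + Rabs MB + 1)).
Proof.
  intros HA HB HMA HMB. pose proof (Rabs_pos MA). pose proof (Rabs_pos MB).
  pose proof (Rle_abs MA). pose proof (Rle_abs MB).
  split; [|split; [|split]].
  - intros [a|b] [a'|b']; simpl; try lra; apply d_nonneg; auto.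
  - intros [a|b] [a'|b']; simpl; split; intro H'; try lra; try discriminate.
    + f_equal; apply (d_eq0 A HA); auto.
    + injection H' as ->; apply d_refl; auto.
    + f_equal; apply (d_eq0 B HB); auto.
    + injection H' as ->; apply d_refl; auto.
  - intros [a|b] [a'|b']; simpl; try reflexivity; apply d_sym; auto.
  - intros [a|b] [a'|b'] [a''|b'']; simpl; try apply d_tri; auto.
    + pose proof (d_nonneg A HA a a'); lra.
    + pose proof (HMA a a''); lra.
    + pose proof (d_nonneg B HB b' b''); lra.
    + pose proof (d_nonneg A HA a' a''); lra.
    + pose proof (HMB b b''); lra.
    + pose proof (d_nonneg B HB b b'); lra.
Qed.
Definition GHle (A B : MSpace) (r : R) : Prop :=
  exists (Z : MSpace) (f : A -> Z) (g : B -> Z), is_metric Z /\ isometric_embedding f /\ isometric_embedding g /\ Hle (image f) (image g) r.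

Lemma GHle_sym A B r : GHle A B r -> GHle B A r.
Proof. intros [Z [f [g [HZ [Hf [Hg H]]]]]]. exists Z, g, f. split; [auto|split;[auto|split;[auto|apply Hle_sym; auto]]]. Qed.

Lemma img_ne {A Z : MSpace} (f : A -> Z) : inhabited A -> nonempty_set (image f).
Proof. intros [a]. exists (f a), a; reflexivity. Qed.

Lemma img_bnd (A B Z : MSpace) (f : A -> Z) (g : B -> Z) : is_metric Z -> isometric_embedding f -> isometric_embedding g ->
  good A -> good B -> exists M, bnd (image f) (image g) M.
Proof. intros HZ Hf Hg [_ [[a0] [MA HA]]] [_ [[b0] [MB HB]]].
  exists (MA + dist (f a0) (g b0) + MB). intros z w [a <-] [b <-].
  pose proof (d_tri Z HZ (f a) (f a0) (g b)). pose proof (d_tri Z HZ (f a0) (g b0) (g b)).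
  rewrite Hf in *. rewrite Hg in *. pose proof (HA a a0). pose proof (HB b0 b). lra.
Qed.

Lemma real_nonneg (A B : MSpace) : good A -> good B -> forall y, (exists (Z : MSpace) (f : A -> Z) (g : B -> Z),
          is_metric Z /\ isometric_embedding f /\ isometric_embedding g /\
          hausdorff (image f) (image g) <= y) -> 0 <= y.
Proof. intros GA GB y [Z [f [g [HZ [Hf [Hg Hy]]]]]].
  destruct (img_bnd A B Z f g HZ Hf Hg GA GB) as [M HM].
  eapply Rle_trans; [|exact Hy]. eapply hausdorff_nonneg; eauto; apply img_ne; [apply GA|apply GB].
Qed.

Lemma dGH_le A B r : good A -> good B -> GHle A B r -> dGH A B <= r.
Proof. intros GA GB [Z [f [g [HZ [Hf [Hg H]]]]]]. unfold dGH. apply Rinf_le with 0.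
  - apply real_nonneg; auto.
  - exists Z, f, g. split; [auto|split;[auto|split;[auto|]]]. apply hausdorff_le; auto; apply img_ne; [apply GA|apply GB].
Qed.

Lemma GHle_dGH A B e : good A -> good B -> 0 < e -> GHle A B (dGH A B + e).
Proof. intros GA GB He.
  destruct (Rinf_approx (fun r => exists (Z : MSpace) (f : A -> Z) (g : B -> Z),
          is_metric Z /\ isometric_embedding f /\ isometric_embedding g /\
          hausdorff (image f) (image g) <= r) 0 e) as [y [[Z [f [g [HZ [Hf [Hg Hy]]]]]] Hlt]].
  - destruct GA as [HA [_ [MA HMA]]]. destruct GB as [HB [_ [MB HMB]]].
    pose (D := Rabs MA + Rabs MB + 1).
    exists (@hausdorff (dunion A B D) (@image A (dunion A B D) inl) (@image B (dunion A B D) inr)), (dunion A B D), (@inl A B : A -> dunion A B D), (@inr A B : B -> dunion A B D).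
    split; [apply dunion_metric; auto|split;[intros x y; reflexivity|split;[intros x y; reflexivity|apply Rle_refl]]].
  - apply real_nonneg; auto.
  - exact He.
  - exists Z, f, g. split; [auto|split;[auto|split;[auto|]]].
    destruct (img_bnd A B Z f g HZ Hf Hg GA GB) as [M HM].
    eapply Hle_mono. eapply hausdorff_Hle; eauto; apply img_ne; [apply GA|apply GB].
    unfold dGH in *. lra.
Qed.
Section Glue.
Variables (B Z1 Z2 : MSpace) (g1 : B -> Z1) (f2 : B -> Z2).
Hypotheses (H1 : is_metric Z1) (H2 : is_metric Z2) (Hg1 : isometric_embedding g1) (Hf2 : isometric_embedding f2).
Variable b0 : B.
Variable delta : R.
Hypothesis Hdelta : 0 < delta.

Definition G (x : Z1) (z : Z2) : R := Rinf (fun r => exists b, r = dist x (g1 b) + dist (f2 b) z).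

Lemma G_le x z b : G x z <= dist x (g1 b) + dist (f2 b) z.
Proof. apply Rinf_le with 0. intros y [b' ->]. pose proof (d_nonneg Z1 H1 x (g1 b')). pose proof (d_nonneg Z2 H2 (f2 b') z). lra.
  exists b; auto. Qed.

Lemma G_nonneg x z : 0 <= G x z.
Proof. apply Rinf_ge. exists (dist x (g1 b0) + dist (f2 b0) z), b0; auto.
  intros y [b' ->]. pose proof (d_nonneg Z1 H1 x (g1 b')). pose proof (d_nonneg Z2 H2 (f2 b') z). lra. Qed.

Lemma G_approx x z e : 0 < e -> exists b, dist x (g1 b) + dist (f2 b) z < G x z + e.
Proof. intro He. destruct (Rinf_approx (fun r => exists b, r = dist x (g1 b) + dist (f2 b) z) 0 e) as [y [[b ->] Hy]]; auto.
  exists (dist x (g1 b0) + dist (f2 b0) z), b0; auto.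
  intros y [b' ->]. pose proof (d_nonneg Z1 H1 x (g1 b')). pose proof (d_nonneg Z2 H2 (f2 b') z). lra.
  exists b; auto. Qed.

Lemma G_tri_l x y z : G x z <= dist x y + G y z.
Proof. apply Rle_plus_epsilon. intros e He. destruct (G_approx y z e He) as [b Hb].
  pose proof (G_le x z b). pose proof (d_tri Z1 H1 x y (g1 b)). lra. Qed.

Lemma G_tri_r x z z' : G x z <= G x z' + dist z' z.
Proof. apply Rle_plus_epsilon. intros e He. destruct (G_approx x z' e He) as [b Hb].
  pose proof (G_le x z b). pose proof (d_tri Z2 H2 (f2 b) z' z). lra. Qed.

Lemma G_mid1 x x' z : dist x x' <= G x z + G x' z.
Proof. apply Rle_plus_epsilon. intros e He. destruct (G_approx x z (e/2)) as [b Hb]; [lra|].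
  destruct (G_approx x' z (e/2)) as [b' Hb']; [lra|].
  pose proof (d_tri Z1 H1 x (g1 b) x'). pose proof (d_tri Z1 H1 (g1 b) (g1 b') x').
  pose proof (d_tri Z2 H2 (f2 b) z (f2 b')).
  rewrite (Hg1 b b') in *. rewrite (Hf2 b b') in *.
  rewrite (d_sym Z1 H1 (g1 b') x') in *. rewrite (d_sym Z2 H2 z (f2 b')) in *. lra. Qed.

Lemma G_mid2 x z z' : dist z z' <= G x z + G x z'.
Proof. apply Rle_plus_epsilon. intros e He. destruct (G_approx x z (e/2)) as [b Hb]; [lra|].
  destruct (G_approx x z' (e/2)) as [b' Hb']; [lra|].
  pose proof (d_tri Z2 H2 z (f2 b) z'). pose proof (d_tri Z2 H2 (f2 b) (f2 b') z').
  pose proof (d_tri Z1 H1 (g1 b) x (g1 b')).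
  rewrite (Hg1 b b') in *. rewrite (Hf2 b b') in *.
  rewrite (d_sym Z1 H1 (g1 b) x) in *. rewrite (d_sym Z2 H2 z (f2 b)) in *. lra. Qed.

Definition gdist (u v : Z1 + Z2) : R := match u, v with
 | inl x, inl y => dist x y | inr z, inr w => dist z w
 | inl x, inr z => G x z + delta | inr z, inl x => G x z + delta end.
Definition Glued : MSpace := {| carrier := (Z1 + Z2)%type; dist := gdist |}.

Lemma Glued_metric : is_metric Glued.
Proof.
  split; [|split; [|split]].
  - intros [a|b] [a'|b']; simpl; try (pose proof (G_nonneg a b'); lra); try (pose proof (G_nonneg a' b); lra);
      [apply d_nonneg; auto | apply d_nonneg; auto].
  - intros [a|b] [a'|b']; simpl; split; intro H'; try discriminate.
    + f_equal; apply (d_eq0 Z1 H1); auto.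
    + injection H' as ->; apply d_refl; auto.
    + pose proof (G_nonneg a b'); lra.
    + pose proof (G_nonneg a' b); lra.
    + f_equal; apply (d_eq0 Z2 H2); auto.
    + injection H' as ->; apply d_refl; auto.
  - intros [a|b] [a'|b']; simpl; try reflexivity; apply d_sym; auto.
  - intros [a|b] [a'|b'] [a''|b'']; simpl.
    + apply d_tri; auto.
    + pose proof (G_tri_l a a' b''); lra.
    + pose proof (G_mid1 a a'' b'); lra.
    + pose proof (G_tri_r a b'' b'); lra.
    + pose proof (G_tri_l a'' a' b); rewrite (d_sym Z1 H1 a'' a') in *; lra.
    + pose proof (G_mid2 a' b b''); lra.
    + pose proof (G_tri_r a'' b b'); rewrite (d_sym Z2 H2 b b') in *; lra.
    + apply d_tri; auto.
Qed.

Lemma Glued_Hle (A C : MSpace) (f1 : A -> Z1) (g2 : C -> Z2) r s :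
  Hle (image f1) (image g1) r -> Hle (image f2) (image g2) s ->
  @Hle Glued (image (fun a => (inl (f1 a) : Glued))) (image (fun c => (inr (g2 c) : Glued))) (r + s + delta).
Proof. intros [K1 K2] [K3 K4]. split.
  - intros u [a <-] e He. destruct (K1 (f1 a) (ex_intro _ a eq_refl) (e/2)) as [w [[b <-] Hw]]; [lra|].
    destruct (K3 (f2 b) (ex_intro _ b eq_refl) (e/2)) as [w' [[c <-] Hw']]; [lra|].
    exists (inr (g2 c)); split. exists c; reflexivity.
    simpl. pose proof (G_le (f1 a) (g2 c) b). lra.
  - intros u [c <-] e He. destruct (K4 (g2 c) (ex_intro _ c eq_refl) (e/2)) as [w [[b <-] Hw]]; [lra|].
    destruct (K2 (g1 b) (ex_intro _ b eq_refl) (e/2)) as [w' [[a <-] Hw']]; [lra|].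
    exists (inl (f1 a)); split. exists a; reflexivity.
    simpl. pose proof (G_le (f1 a) (g2 c) b).
    rewrite (d_sym Z1 H1 (g1 b) (f1 a)) in Hw'. rewrite (d_sym Z2 H2 (g2 c) (f2 b)) in Hw. lra.
Qed.
End Glue.

Lemma GHle_trans (A B C : MSpace) (r s delta : R) : inhabited B -> 0 < delta -> GHle A B r -> GHle B C s -> GHle A C (r + s + delta).
Proof. intros [b0] Hd [Z1 [f1 [g1 [H1 [Hf1 [Hg1 K1]]]]]] [Z2 [f2 [g2 [H2 [Hf2 [Hg2 K2]]]]]].
  exists (Glued B Z1 Z2 g1 f2 delta), (fun a => (inl (f1 a) : Glued B Z1 Z2 g1 f2 delta)), (fun c => (inr (g2 c) : Glued B Z1 Z2 g1 f2 delta)).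
  split; [|split; [|split]].
  - apply Glued_metric; auto.
  - intros x y. apply Hf1.
  - intros x y. apply Hg2.
  - apply Glued_Hle; auto.
Qed.
Fixpoint iterL {T : Type} (F : list T -> T) (n : nat) : list T :=
  match n with O => nil | S k => F (iterL F k) :: iterL F k end.

Lemma iterL_in {T : Type} (F : list T -> T) m n : (m < n)%nat -> In (F (iterL F m)) (iterL F n).
Proof. induction n as [|k IH]; intro H. lia. simpl.
  destruct (Nat.eq_dec m k) as [->|Hne]. left; reflexivity. right; apply IH; lia. Qed.

Lemma net X : is_metric X -> compact_space X -> forall eps, 0 < eps ->
  exists l : list X, forall x, exists p, In p l /\ dist x p < eps.
Proof.
  intros HX Hc eps He. apply NNPP; intro Hn.
  assert (Hf : forall l : list X, exists x, forall p, In p l -> eps <= dist x p).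
  { intro l. apply NNPP; intro H. apply Hn; exists l; intro x. apply NNPP; intro H'.
    apply H; exists x; intros p Hp. apply Rnot_lt_le; intro Hlt; apply H'; exists p; auto. }
  pose (F := fun l => proj1_sig (constructive_indefinite_description _ (Hf l))).
  assert (HF : forall l p, In p l -> eps <= dist (F l) p).
  { intros l. exact (proj2_sig (constructive_indefinite_description _ (Hf l))). }
  pose (u := fun n => F (iterL F n)).
  destruct (Hc u) as [phi [l0 [Hphi Hconv]]].
  destruct (Hconv (eps/2)) as [N HN]; [lra|].
  pose proof (HN N (le_n N)). pose proof (HN (S N) (le_S _ _ (le_n N))).
  pose proof (HF (iterL F (phi (S N))) (u (phi N)) (iterL_in F _ _ (Hphi N))).
  pose proof (d_tri X HX (u (phi (S N))) l0 (u (phi N))).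
  rewrite (d_sym X HX l0 (u (phi N))) in *. unfold u in *. lra.
Qed.

Lemma sum_bound X (HX : is_metric X) (x0 : X) (l : list X) :
  forall p, In p l -> dist x0 p <= fold_right (fun p acc => dist x0 p + acc) 0 l.
Proof. induction l as [|a l IH]; intros p Hp; simpl. destruct Hp.
  assert (0 <= fold_right (fun p acc => dist x0 p + acc) 0 l).
  { clear IH Hp. induction l; simpl. lra. pose proof (d_nonneg X HX x0 a0). lra. }
  destruct Hp as [<-|Hp]. lra. pose proof (IH p Hp). pose proof (d_nonneg X HX x0 a). lra. Qed.

Lemma compact_bounded X : is_metric X -> inhabited X -> compact_space X -> bounded X.
Proof. intros HX [x0] Hc. destruct (net X HX Hc 1) as [l Hl]; [lra|].
  pose (SS := fold_right (fun p acc => dist x0 p + acc) 0 l).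
  exists (1 + SS + SS + 1). intros x y.
  destruct (Hl x) as [p [Hp Hxp]]. destruct (Hl y) as [q [Hq Hyq]].
  pose proof (sum_bound X HX x0 l p Hp). pose proof (sum_bound X HX x0 l q Hq).
  pose proof (d_tri X HX x p y). pose proof (d_tri X HX p x0 y). pose proof (d_tri X HX x0 q y).
  rewrite (d_sym X HX p x0) in *. rewrite (d_sym X HX q y) in *. unfold SS. lra.
Qed.

Definition sub (X : MSpace) (P : X -> Prop) : MSpace :=
  {| carrier := {x : X | P x}; dist := fun a b => dist (proj1_sig a) (proj1_sig b) |}.

Lemma sub_metric (X : MSpace) (P : X -> Prop) : is_metric X -> is_metric (sub X P).
Proof. intro HX. split; [|split; [|split]]; simpl.
  - intros; apply d_nonneg; auto.
  - intros [x Hx] [y Hy]; simpl. split; intro H.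
    + apply d_eq0 in H; auto. subst y. f_equal; apply proof_irrelevance.
    + injection H as ->. apply d_refl; auto.
  - intros; apply d_sym; auto.
  - intros; apply d_tri; auto.
Qed.

Lemma sub_finite (X : MSpace) (l : list X) : exists l' : list (sub X (fun x => In x l)), forall s, In s l'.
Proof.
  assert (forall k, incl k l -> exists k' : list (sub X (fun x => In x l)), forall s, In (proj1_sig s) k -> In s k').
  { induction k as [|a k IH]; intro Hk.
    - exists nil. intros s [].
    - destruct IH as [k' Hk']. intros x Hx; apply Hk; right; auto.
      assert (Ha : In a l) by (apply Hk; left; auto).
      exists ((exist _ a Ha : sub X (fun x => In x l)) :: k'). intros [x Hx] [Hxa|Hxk]; simpl in *.
      + subst x. left. f_equal. apply proof_irrelevance.
      + right. apply (Hk' (exist _ x Hx)); auto. }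
  destruct (H l (incl_refl l)) as [l' Hl']. exists l'. intros s. apply Hl'. exact (proj2_sig s).
Qed.
Section Approx.
Variable X : MSpace.
Hypothesis HX : is_metric X.
Variable M : R.
Hypothesis HM : forall x y : X, dist x y <= M.
Variable l : list X.
Let Xn := sub X (fun x => In x l).

Definition embS (A : Xn -> Prop) : X -> Prop := fun x => exists s, A s /\ proj1_sig s = x.

Lemma embS_prop (A : Hyper Xn) : nonempty_set (embS (proj1_sig A)) /\ is_closed (embS (proj1_sig A)).
Proof. destruct A as [A [[s Hs] HcA]]. simpl. split.
  - exists (proj1_sig s), s; auto.
  - apply (finite_closed X HX _ l). intros z [t [_ <-]]. exact (proj2_sig t).
Qed.

Definition embH (A : Hyper Xn) : Hyper X := exist _ (embS (proj1_sig A)) (embS_prop A).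

Lemma Hle_emb (A B : Xn -> Prop) r : Hle A B r <-> Hle (embS A) (embS B) r.
Proof. split.
  - intros [K1 K2]. split.
    + intros x [s [Hs <-]] e He. destruct (K1 s Hs e He) as [t [Ht Hd]]. exists (proj1_sig t); split; auto. exists t; auto.
    + intros x [s [Hs <-]] e He. destruct (K2 s Hs e He) as [t [Ht Hd]]. exists (proj1_sig t); split; auto. exists t; auto.
  - intros [K1 K2]. split.
    + intros s Hs e He. destruct (K1 (proj1_sig s) (ex_intro _ s (conj Hs eq_refl)) e He) as [y [[t [Ht <-]] Hd]]. exists t; split; auto.
    + intros s Hs e He. destruct (K2 (proj1_sig s) (ex_intro _ s (conj Hs eq_refl)) e He) as [y [[t [Ht <-]] Hd]]. exists t; split; auto.
Qed.

Lemma embH_iso : isometric_embedding embH.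
Proof. intros [A [HA HcA]] [B [HB HcB]]. rewrite !Hyper_dist. simpl.
  assert (HXn : is_metric Xn) by (apply sub_metric; auto).
  assert (HA' := proj1 (embS_prop (exist _ A (conj HA HcA)))). simpl in HA'.
  assert (HB' := proj1 (embS_prop (exist _ B (conj HB HcB)))). simpl in HB'.
  apply Rle_antisym.
  - apply hausdorff_le; auto. apply Hle_emb. eapply hausdorff_Hle; eauto. intros a b _ _. apply HM.
  - apply hausdorff_le; auto. apply Hle_emb. eapply hausdorff_Hle; eauto. intros a b _ _. apply HM.
Qed.

Lemma Hyper_net eps : 0 < eps -> (forall x, exists p, In p l /\ dist x p < eps) -> GHle (Hyper X) (Hyper Xn) eps.
Proof. intros He Hl.
  assert (HXn : is_metric Xn) by (apply sub_metric; auto).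
  assert (HHX : is_metric (Hyper X)) by (apply Hyper_metric; auto; exists M; auto).
  exists (Hyper X), (fun A => A), embH. split; [auto|split; [intros x y; reflexivity|split; [apply embH_iso|]]].
  split.
  - intros A' [A <-] e He'. cbv beta. destruct A as [A [[a0 Ha0] HcA]].
    pose (A'' := fun s : Xn => exists a, A a /\ dist a (proj1_sig s) < eps).
    assert (HA'' : nonempty_set A'' /\ is_closed A'').
    { split.
      - destruct (Hl a0) as [p [Hp Hd]]. exists (exist _ p Hp : Xn), a0; auto.
      - destruct (sub_finite X l) as [l' Hl']. apply (finite_closed Xn HXn _ l'). intros; auto. }
    exists (embH (exist _ A'' HA'')). split. exists (exist _ A'' HA''); reflexivity.
    apply Rle_lt_trans with eps; [|lra].
    rewrite Hyper_dist. simpl. apply hausdorff_le; auto. exists a0; auto. apply (proj1 (embS_prop (exist _ A'' HA''))).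
    split.
    + intros a Ha e2 He2. destruct (Hl a) as [p [Hp Hd]]. exists p. split. exists (exist _ p Hp : Xn). split; auto. exists a; auto. lra.
    + intros x [s [[a [Ha Hd]] <-]] e2 He2. exists a; split; auto. rewrite d_sym; auto. lra.
  - intros B [C <-] e He'. exists (embH C). split. exists (embH C); reflexivity.
    rewrite d_refl; auto. lra.
Qed.

Lemma net_GHle eps : 0 < eps -> (forall x, exists p, In p l /\ dist x p < eps) -> GHle Xn X eps.
Proof. intros He Hl. exists X, (fun s : Xn => proj1_sig s), (fun x => x).
  split; [auto|split; [intros x y; reflexivity|split; [intros x y; reflexivity|]]].
  split.
  - intros x [s <-] e He'. exists (proj1_sig s); split. exists (proj1_sig s); reflexivity. rewrite d_refl; auto; lra.
  - intros x [y <-] e He'. destruct (Hl y) as [p [Hp Hd]]. exists p; split. exists (exist _ p Hp : Xn); reflexivity. lra.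
Qed.
End Approx.

Lemma approx X : is_metric X -> inhabited X -> compact_space X -> forall eps, 0 < eps ->
  exists Xn : MSpace, is_metric Xn /\ inhabited Xn /\ finite_space Xn /\ good Xn /\ GHle Xn X eps /\ GHle (Hyper X) (Hyper Xn) eps.
Proof. intros HX [x0] Hc eps He.
  destruct (compact_bounded X HX (inhabits x0) Hc) as [M HM].
  destruct (net X HX Hc eps He) as [l Hl].
  exists (sub X (fun x => In x l)).
  assert (Hm : is_metric (sub X (fun x => In x l))) by (apply sub_metric; auto).
  assert (Hi : inhabited (sub X (fun x => In x l))).
  { destruct (Hl x0) as [p [Hp _]]. constructor. exact (exist _ p Hp). }
  split; [auto|split;[auto|split;[apply sub_finite|split;[|split]]]].
  - split; auto. split; auto. exists M. intros [x Hx] [y Hy]; simpl; auto.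
  - apply net_GHle; auto.
  - apply Hyper_net with M; auto.
Qed.
Lemma compact_good X : is_metric X -> inhabited X -> compact_space X -> good X.
Proof. intros; split; auto; split; auto; apply compact_bounded; auto. Qed.

Theorem mainTheorem19 :
  (forall X Y : MSpace,
     is_metric X -> inhabited X -> finite_space X ->
     is_metric Y -> inhabited Y -> finite_space Y ->
     dGH (Hyper X) (Hyper Y) = dGH X Y) ->
  forall X Y : MSpace,
     is_metric X -> inhabited X -> compact_space X ->
     is_metric Y -> inhabited Y -> compact_space Y ->
     dGH (Hyper X) (Hyper Y) = dGH X Y.
Proof.
  intros Hyp X Y HX iX cX HY iY cY.
  assert (GX : good X) by (apply compact_good; auto).
  assert (GY : good Y) by (apply compact_good; auto).
  assert (GHX := Hyper_good X GX). assert (GHY := Hyper_good Y GY).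
  assert (Key : forall eps, 0 < eps ->
     dGH (Hyper X) (Hyper Y) <= dGH X Y + 11 * eps /\ dGH X Y <= dGH (Hyper X) (Hyper Y) + 11 * eps).
  { intros eps He.
    destruct (approx X HX iX cX eps He) as [Xn [HXn [iXn [fXn [GXn [N1 N2]]]]]].
    destruct (approx Y HY iY cY eps He) as [Yn [HYn [iYn [fYn [GYn [M1 M2]]]]]].
    assert (GHXn := Hyper_good Xn GXn). assert (GHYn := Hyper_good Yn GYn).
    pose proof (Hyp Xn Yn HXn iXn fXn HYn iYn fYn) as Heq.
    split.
    - assert (dGH Xn Yn <= dGH X Y + 6 * eps).
      { apply Rle_trans with (eps + (dGH X Y + eps) + eps + eps + eps); [|lra].
        apply dGH_le; auto.
        eapply GHle_trans; [apply GY|exact He| |apply GHle_sym; exact M1].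
        eapply GHle_trans; [apply GX|exact He|exact N1|apply GHle_dGH; auto]. }
      assert (dGH (Hyper X) (Hyper Y) <= dGH (Hyper Xn) (Hyper Yn) + 5 * eps).
      { apply Rle_trans with (eps + (dGH (Hyper Xn) (Hyper Yn) + eps) + eps + eps + eps); [|lra].
        apply dGH_le; auto.
        eapply GHle_trans; [apply GHYn|exact He| |apply GHle_sym; exact M2].
        eapply GHle_trans; [apply GHXn|exact He|exact N2|apply GHle_dGH; auto]. }
      lra.
    - assert (dGH (Hyper Xn) (Hyper Yn) <= dGH (Hyper X) (Hyper Y) + 6 * eps).
      { apply Rle_trans with (eps + (dGH (Hyper X) (Hyper Y) + eps) + eps + eps + eps); [|lra].
        apply dGH_le; auto.
        eapply GHle_trans; [apply GHY|exact He| |exact M2].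
        eapply GHle_trans; [apply GHX|exact He|apply GHle_sym; exact N2|apply GHle_dGH; auto]. }
      assert (dGH X Y <= dGH Xn Yn + 5 * eps).
      { apply Rle_trans with (eps + (dGH Xn Yn + eps) + eps + eps + eps); [|lra].
        apply dGH_le; auto.
        eapply GHle_trans; [apply GYn|exact He| |exact M1].
        eapply GHle_trans; [apply GXn|exact He|apply GHle_sym; exact N1|apply GHle_dGH; auto]. }
      lra. }
  apply Rle_antisym; apply Rle_plus_epsilon; intros e He;
    destruct (Key (e / 11)) as [K1 K2]; lra.
Qed.
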